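(* Let $\mathbb{F}$ be a finite field and $n\ge1$. The completely isolated subsemigroups of $M(n,\mathbb{F})$ are exactly $M(n,\mathbb{F})$, $\mathrm{GL}(n,\mathbb{F})$ and $I_{n-1}=M(n,\mathbb{F})\setminus\mathrm{GL}(n,\mathbb{F})$.
   Context: $M(n,\mathbb{F})$ is the semigroup of $n\times n$ matrices over $\mathbb{F}$ under multiplication; $\mathrm{GL}(n,\mathbb{F})$ is its group of units; $I_{n-1}$ is the set of all matrices of rank at most $n-1$. A (nonempty) subsemigroup $T$ of a semigroup $S$ is completely isolated if for all $x,y\in S$, $xy\in T$ implies $x\in T$ or $y\in T$. *)

(* Defs.v *)
From HB Require Import structures.
From mathcomp Require Import all_boot all_order all_algebra all_fingroup all_field.
Set Implicit Arguments. Unset Strict Implicit. Unset Printing Implicit Defensive.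
Import GRing.Theory.
Local Open Scope ring_scope.

Definition subsemigroup (F : finFieldType) (n : nat) (T : {set 'M[F]_n}) : Prop :=
  T != set0 /\ (forall x y, x \in T -> y \in T -> x *m y \in T).

Definition completely_isolated (F : finFieldType) (n : nat) (T : {set 'M[F]_n}) : Prop :=
  subsemigroup T /\ (forall x y : 'M[F]_n, x *m y \in T -> (x \in T) || (y \in T)).

Definition GLset (F : finFieldType) (n : nat) : {set 'M[F]_n} := [set A | A \in unitmx].

Definition Iset (F : finFieldType) (n : nat) : {set 'M[F]_n} := [set A | \rank A <= n.-1]%N.

(* Main.v *)
Require Import Defs.
From HB Require Import structures.
From mathcomp Require Import all_boot all_order all_algebra all_fingroup all_field.
Set Implicit Arguments. Unset Strict Implicit. Unset Printing Implicit Defensive.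
Import GRing.Theory.
Local Open Scope ring_scope.
Section Sa.
Variables (F : finFieldType) (m : nat).
Local Notation R := 'M[F]_m.+1.

Lemma unitE (A : R) : (A \is a GRing.unit) = (A \in unitmx).
Proof. by []. Qed.

Lemma unit_pow (g : R) : g \is a GRing.unit -> exists2 k, (0 < k)%N & g ^+ k = 1.
Proof.
move=> gU.
pose f (i : 'I_(#|{: R}|.+1)) := g ^+ i.
have : ~~ injectiveb f.
  by apply/negP => /injectiveP /leq_card; rewrite card_ord ltnn.
case/injectivePn => i [j neq fij].
have [a [b [lt fij']]] : exists a b : 'I_(#|{: R}|.+1), (a < b)%N /\ f a = f b.
  case: (ltngtP i j) => c.
  - exists i; exists j; split; [exact: c | exact: fij].
  - exists j; exists i; split; [exact: c | exact: (esym fij)].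
  - case/eqP: neq; apply: val_inj; exact: c.
clear fij neq; move: a b lt fij'; clear i j => i j lt fij.
exists (j - i)%N; first by rewrite subn_gt0.
have fij2 : g ^+ i = g ^+ j := fij.
apply: (mulIr (unitrX i gU)); rewrite mul1r -exprD subnK; last exact: ltnW.
exact: (esym fij2).
Qed.

Lemma nil_entries (X : R) :
  (forall i j : 'I_m.+1, (i : nat) != j.+1 -> X i j = 0) ->
  forall k (i j : 'I_m.+1), (i : nat) != (j + k)%N -> (X ^+ k) i j = 0.
Proof.
move=> HX; elim=> [|k IH] i j ne.
  rewrite expr0 !mxE; case: eqP => [e|] //; by rewrite e addn0 eqxx in ne.
rewrite exprSr -mulmxE mxE; apply: big1 => l _.
have [e|ne'] := eqVneq (l : nat) j.+1.
  by rewrite IH ?mul0r // e addSnnS.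
by rewrite HX ?mulr0.
Qed.

Lemma nil_X (X : R) :
  (forall i j : 'I_m.+1, (i : nat) != j.+1 -> X i j = 0) -> X ^+ m.+1 = 0.
Proof.
move=> HX; apply/matrixP => i j; rewrite mxE nil_entries //.
by apply: contraTneq (ltn_ord i) => ->; rewrite -leqNgt leq_addl.
Qed.
End Sa.
Section Sb.
Variables (F : finFieldType) (m : nat).
Local Notation R := 'M[F]_m.+1.

Lemma conj_pow (U X : R) k : U \is a GRing.unit ->
  (U^-1 * X * U) ^+ k = U^-1 * X ^+ k * U.
Proof.
move=> uU; elim: k => [|k IH]; first by rewrite !expr0 mulr1 mulVr.
by rewrite exprSr IH exprSr !mulrA mulrK.
Qed.

Lemma perm_unit (s : 'S_m.+1) : (perm_mx s : R) \is a GRing.unit.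
Proof. by rewrite unitE unitmxE det_perm unitrX ?unitrN1. Qed.

Lemma sing_nil (A : R) : (\rank A < m.+1)%N ->
  exists2 g : R, g \is a GRing.unit & (g * A) ^+ m.+1 = 0.
Proof.
move=> rA.
pose s : 'S_m.+1 := perm (@ord_pred_inj m.+1).
pose L : R := col_ebase A; pose U : R := row_ebase A.
have uL : L \is a GRing.unit by rewrite unitE col_ebase_unit.
have uU : U \is a GRing.unit by rewrite unitE row_ebase_unit.
pose X : R := perm_mx s * pid_mx (\rank A).
exists (U^-1 * perm_mx s * L^-1).
  by rewrite unitrMr ?unitrV // unitrMl ?perm_unit ?unitrV.
have -> : U^-1 * perm_mx s * L^-1 * A = U^-1 * X * U.
  rewrite -{1}(mulmx_ebase A) !mulmxE -/L -/U /X.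
  by rewrite !mulrA mulrVK.
rewrite conj_pow // nil_X ?mulr0 ?mul0r //.
move=> i j ne; case: (eqVneq (X i j) 0) => // nz; case/negP: ne.
move: nz; rewrite /X -mulmxE -row_permE mxE mxE permE.
case: (boolP (_ && _)) => [/andP[/eqP e lt] _|]; last by rewrite eqxx.
have h : nat_of_ord (ordS (ord_pred i)) = ((nat_of_ord (ord_pred i)).+1 %% m.+1)%N by [].
rewrite ord_predK in h; rewrite h e modn_small //.
by apply: leq_ltn_trans rA; rewrite -e.
Qed.
End Sb.
Section Sd.
Variables (F : finFieldType) (m : nat).
Local Notation R := 'M[F]_m.+1.

Lemma inGL (A : R) : (A \in GLset F m.+1) = (A \is a GRing.unit).
Proof. by rewrite inE. Qed.

Lemma inI (A : R) : (A \in Iset F m.+1) = ~~ (A \is a GRing.unit).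
Proof.
rewrite inE unitE -row_free_unit -row_leq_rank /=.
by rewrite -ltnNge ltnS.
Qed.

Lemma main_fwd (T : {set R}) : completely_isolated T ->
  T = [set: R] \/ T = GLset F m.+1 \/ T = Iset F m.+1.
Proof.
case=> [[Tne Tc0] Tp0].
have Tc : forall x y : R, x \in T -> y \in T -> x * y \in T := Tc0.
have Tp : forall x y : R, x * y \in T -> (x \in T) || (y \in T) := Tp0.
have Cc : forall x y : R, x \notin T -> y \notin T -> x * y \notin T.
  by move=> x y hx hy; apply/negP => /Tp; rewrite (negbTE hx) (negbTE hy).
have Cp : forall x y : R, x * y \notin T -> (x \notin T) || (y \notin T).
  move=> x y; apply: contraR; rewrite negb_or !negbK => /andP[hx hy].
  exact: Tc.
have powT : forall (x : R) k, x \in T -> x ^+ k.+1 \in T.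
  move=> x k hx; elim: k => [|k IH]; first by rewrite expr1.
  by rewrite exprSr; apply: Tc.
have powC : forall (x : R) k, x \notin T -> x ^+ k.+1 \notin T.
  move=> x k hx; elim: k => [|k IH]; first by rewrite expr1.
  by rewrite exprSr; apply: Cc.
have unitP : forall g : R, g \is a GRing.unit -> (g \in T) = (1 \in T).
  move=> g gU; have [[|k] // _ hk] := unit_pow gU.
  case: (boolP (g \in T)) => h.
    by rewrite -hk powT.
  by apply/esym/negbTE; rewrite -hk powC.
have nilP : forall (x : R) k, x ^+ k.+1 = 0 -> (x \in T) = (0 \in T).
  move=> x k hk; case: (boolP (x \in T)) => h.
    by rewrite -hk powT.
  by apply/esym/negbTE; rewrite -hk powC.
have singP : forall A : R, ~~ (A \is a GRing.unit) -> (A \in T) = (0 \in T).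
  move=> A nA.
  have rA : (\rank A < m.+1)%N.
    by rewrite ltn_neqAle rank_leq_row andbT; move: nA; rewrite unitE -row_free_unit.
  have [g gU hg] := sing_nil rA.
  have hgA := nilP _ _ hg.
  have hgi : (g^-1 \in T) = (1 \in T) by apply: unitP; rewrite unitrV.
  have hg' := unitP _ gU.
  have eA : A = g^-1 * (g * A) by rewrite mulKr.
  case: (boolP (1 \in T)) => h1; case: (boolP ((0 : R) \in T)) => h0.
  - by rewrite eA; apply: Tc; rewrite ?hgi ?hgA.
  - apply/negbTE; move: (Cp g A); rewrite hgA (negbTE h0) hg' h1 /=; exact.
  - apply/idP; move: (Tp g A); rewrite hgA h0 hg' (negbTE h1) /=; exact.
  - by apply/negbTE; rewrite eA; apply: Cc; rewrite ?hgi ?hgA.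
case: (boolP (1 \in T)) => h1; case: (boolP ((0 : R) \in T)) => h0.
- left; apply/setP => A; rewrite inE.
  by case: (boolP (A \is a GRing.unit)) => u; [rewrite unitP | rewrite singP].
- right; left; apply/setP => A; rewrite inGL.
  case: (boolP (A \is a GRing.unit)) => u; first by rewrite unitP.
  by rewrite singP // (negbTE h0).
- right; right; apply/setP => A; rewrite inI.
  case: (boolP (A \is a GRing.unit)) => u; last by rewrite singP.
  by rewrite unitP // (negbTE h1).
- exfalso; move/negP: Tne; apply; apply/eqP/setP => A; rewrite inE.
  case: (boolP (A \is a GRing.unit)) => u; first by rewrite unitP // (negbTE h1).
  by rewrite singP // (negbTE h0).
Qed.

Lemma main_bwd (T : {set R}) :
  T = [set: R] \/ T = GLset F m.+1 \/ T = Iset F m.+1 -> completely_isolated T.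
Proof.
case=> [->|[->|->]].
- by split; [split; [apply/set0Pn; exists 0; rewrite inE| move=> x y; rewrite !inE]| move=> x y; rewrite !inE].
- split; [split|].
  + by apply/set0Pn; exists 1; rewrite inGL unitr1.
  + move=> x y; rewrite !inGL !unitE => hx hy; by rewrite unitmx_mul hx hy.
  + move=> x y; rewrite !inGL !unitE unitmx_mul => /andP[-> _] //.
- split; [split|].
  + by apply/set0Pn; exists 0; rewrite inI unitr0.
  + move=> x y; rewrite !inI !unitE => hx hy; by rewrite unitmx_mul negb_and hx.
  + move=> x y; rewrite !inI !unitE unitmx_mul negb_and //.
Qed.
End Sd.

Theorem proposition25 (F : finFieldType) (n : nat) (hn : (1 <= n)%N)
  (T : {set 'M[F]_n}) :
  completely_isolated T <->
  (T = [set: 'M[F]_n] \/ T = GLset F n \/ T = Iset F n).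
Proof.
case: n hn T => [//|m] _ T; split; [exact: main_fwd | exact: main_bwd].
Qed.
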